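(* Consider a sequence of total systems indexed by the size $N$ (the system S is fixed and the bath grows). For each $N$, the total Hamiltonian $H=H^{(N)}$ on $\mathcal{H}_{\mathrm{S}}\otimes\mathcal{H}_{\mathrm{B}}^{(N)}$ (finite-dimensional) has non-degenerate spectrum with eigenpairs $(E_j,|E_j\rangle)$, and the initial state is a product $\rho_{\mathrm{S}}(0)\otimes\rho_{\mathrm{B}}(0)$ (depending on $N$). Fix an energy density $u$ and widths $\Delta=\Delta_N>0$ with $\Delta_N=\mathcal{O}(N^\alpha)$ for some $0\le\alpha<1$, and let $M_{uN,\Delta}:=\{j:|E_j-uN|\le\Delta\}$ (assumed nonempty) and $\rho^{\mathrm{mc}}:=\frac{1}{|M_{uN,\Delta}|}\sum_{j\in M_{uN,\Delta}}|E_j\rangle\langle E_j|$. Assume: (i) (strong ETH) for every $\epsilon>0$, for all sufficiently large $N$, $\mathcal{D}_{\mathrm{S}}(|E_j\rangle\langle E_j|,\rho^{\mathrm{mc}})<\epsilon$ for every $j\in M_{uN,\Delta}$; (ii) (initial energy distribution) with $P_{\mathrm{out}}:=\sum_{j\notin M_{uN,\Delta}}|E_j\rangle\langle E_j|$, for every $\epsilon>0$, $\mathrm{Tr}[P_{\mathrm{out}}\,\rho_{\mathrm{S}}(0)\otimes\rho_{\mathrm{B}}(0)]<\epsilon$ for all sufficiently large $N$. Then for every $\epsilon>0$, $\mathcal{D}_{\mathrm{S}}(\omega,\rho^{\mathrm{mc}})<\epsilon$ for all sufficiently large $N$, where $\omega$ is the diagonal ensemble of $\rho_{\mathrm{S}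}(0)\otimes\rho_{\mathrm{B}}(0)$.
   Context: The diagonal ensemble of an initial state $\rho(0)$ is $\omega:=\lim_{\tau\to\infty}\frac1\tau\int_0^\tau e^{-iHt}\rho(0)e^{iHt}\,dt$; for non-degenerate $H$ this equals $\sum_j|E_j\rangle\langle E_j|\rho(0)|E_j\rangle\langle E_j|$. For density operators $\rho,\tau$ on $\mathcal{H}_{\mathrm{S}}\otimes\mathcal{H}_{\mathrm{B}}$, the local trace distance is $\mathcal{D}_{\mathrm{S}}(\rho,\tau):=\frac12\mathrm{Tr}\bigl|\mathrm{Tr}_{\mathrm{B}}\rho-\mathrm{Tr}_{\mathrm{B}}\tau\bigr|$. *)

(* Defs.v *)
From HB Require Import structures.
From mathcomp Require Import all_boot all_order all_algebra.
From mathcomp Require Import all_classical all_reals.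
From mathcomp Require Import exp.
From mathcomp Require Export complex mxtens.
Set Implicit Arguments. Unset Strict Implicit. Unset Printing Implicit Defensive.
Import Order.TTheory GRing.Theory Num.Theory.
Local Open Scope ring_scope.
Local Open Scope complex_scope.

Section QDefs.
Variable R : realType.
Local Notation C := R[i].

Definition adjmx {m n} (A : 'M[C]_(m, n)) : 'M[C]_(n, m) := (map_mx Num.conj A)^T.

Definition is_hermitian {n} (A : 'M[C]_n) : Prop := adjmx A = A.

Definition is_psd {n} (A : 'M[C]_n) : Prop :=
  is_hermitian A /\ forall x : 'cV[C]_n, 0 <= (adjmx x *m A *m x) 0 0.

Definition is_density {n} (A : 'M[C]_n) : Prop := is_psd A /\ \tr A = 1.

Definition ketbra {n} (v : 'cV[C]_n) : 'M[C]_n := v *m adjmx v.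

(* partial trace over the second (bath) factor of C^dS (x) C^dB,
   with the Kronecker ordering of tensmx *)
Definition ptraceB {dS dB} (A : 'M[C]_(dS * dB)) : 'M[C]_dS :=
  \matrix_(i, k) \sum_(b < dB) A (mxtens_index (i, b)) (mxtens_index (k, b)).

Definition absmx {n} (A : 'M[C]_n) : 'M[C]_n :=
  xget 0 [set S : 'M[C]_n | is_psd S /\ S *m S = adjmx A *m A].

(* trace norm Tr|A| (real part taken only to land in R; the trace of a is_psd
   matrix is real) *)
Definition trnorm {n} (A : 'M[C]_n) : R := complex.Re (\tr (absmx A)).

Definition DS {dS dB} (rho tau : 'M[C]_(dS * dB)) : R :=
  2^-1 * trnorm (ptraceB rho - ptraceB tau).

(* diagonal ensemble for non-degenerate H with eigenbasis v *)
Definition diag_ens {n} (v : 'I_n -> 'cV[C]_n) (rho : 'M[C]_n) : 'M[C]_n :=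
  \sum_(j < n) ketbra (v j) *m rho *m ketbra (v j).

Definition shell {n} (E : 'I_n -> R) (e Delta : R) : {set 'I_n} :=
  [set j | `|E j - e| <= Delta].

Definition rho_mc {n} (v : 'I_n -> 'cV[C]_n) (M : {set 'I_n}) : 'M[C]_n :=
  (#|M|%:R)^-1 *: \sum_(j in M) ketbra (v j).

Definition Pout {n} (v : 'I_n -> 'cV[C]_n) (M : {set 'I_n}) : 'M[C]_n :=
  \sum_(j in ~: M) ketbra (v j).

End QDefs.

(* Main.v *)
Require Import Defs.
From HB Require Import structures.
From mathcomp Require Import all_boot all_order all_algebra.
From mathcomp Require Import all_classical all_reals.
From mathcomp Require Import exp.
From mathcomp Require Import complex mxtens.
From mathcomp Require Import spectral sesquilinear ring lra.
Import Order.TTheory GRing.Theory Num.Theory.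
Local Open Scope ring_scope.
Local Open Scope complex_scope.
Set Implicit Arguments. Unset Strict Implicit. Unset Printing Implicit Defensive.
Section Aux.
Local Close Scope complex_scope.
Variable R : realType.
Local Notation C := R[i].
Implicit Types (c : C).

Lemma adjmxE m n (A : 'M[C]_(m, n)) i j : adjmx A i j = (A j i)^*.
Proof. by rewrite /adjmx !mxE. Qed.

Lemma adjmxK m n (A : 'M[C]_(m, n)) : adjmx (adjmx A) = A.
Proof. by apply/matrixP=> i j; rewrite !adjmxE conjCK. Qed.

Lemma adjmxM m n p (A : 'M[C]_(m, n)) (B : 'M[C]_(n, p)) :
  adjmx (A *m B) = adjmx B *m adjmx A.
Proof.
apply/matrixP=> i j; rewrite adjmxE !mxE rmorph_sum; apply: eq_bigr => k _.
by rewrite !adjmxE rmorphM mulrC.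
Qed.

Lemma adjmxD m n (A B : 'M[C]_(m, n)) : adjmx (A + B) = adjmx A + adjmx B.
Proof. by apply/matrixP=> i j; rewrite /adjmx !mxE rmorphD. Qed.

Lemma adjmxN m n (A : 'M[C]_(m, n)) : adjmx (- A) = - adjmx A.
Proof. by apply/matrixP=> i j; rewrite /adjmx !mxE rmorphN. Qed.

Lemma adjmxB m n (A B : 'M[C]_(m, n)) : adjmx (A - B) = adjmx A - adjmx B.
Proof. by rewrite adjmxD adjmxN. Qed.

Lemma adjmxZ m n c (A : 'M[C]_(m, n)) : adjmx (c *: A) = c^* *: adjmx A.
Proof. by apply/matrixP=> i j; rewrite /adjmx !mxE rmorphM. Qed.

Lemma adjmx_sum m n (I : finType) (F : I -> 'M[C]_(m, n)) :
  adjmx (\sum_i F i) = \sum_i adjmx (F i).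
Proof.
apply/matrixP=> i j; rewrite adjmxE !summxE rmorph_sum.
by apply: eq_bigr => k _; rewrite adjmxE.
Qed.

Lemma adjmx1 n : adjmx (1%:M : 'M[C]_n) = 1%:M.
Proof. by apply/matrixP=> i j; rewrite adjmxE !mxE eq_sym rmorphMn rmorph1. Qed.

Lemma adjmx_diag n (d : 'rV[C]_n) : adjmx (diag_mx d) = diag_mx (map_mx Num.conj d).
Proof.
apply/matrixP=> i j; rewrite adjmxE !mxE eq_sym.
by case: eqP => [->|]; rewrite ?mulr1n ?mulr0n ?rmorph0.
Qed.

Lemma adjmx_tens m n p q (A : 'M[C]_(m, n)) (B : 'M[C]_(p, q)) :
  adjmx (A *t B) = adjmx A *t adjmx B.
Proof. by apply/matrixP=> i j; rewrite /adjmx !mxE rmorphM. Qed.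

Lemma adjmx_tC m n (A : 'M[C]_(m, n)) : adjmx A = (A ^t Num.conj)%sesqui.
Proof. by apply/matrixP=> i j; rewrite adjmxE !mxE. Qed.

End Aux.
Section Spec.
Local Close Scope complex_scope.
Variable R : realType.
Local Notation C := R[i].
Implicit Types (c : C).

Lemma herm_hermsym n (A : 'M[C]_n) : is_hermitian A -> A \is hermsymmx.
Proof.
move=> hA; apply/is_hermitianmxP; rewrite expr0 scale1r.
by rewrite -adjmx_tC hA.
Qed.

Lemma quad_delta n (g : 'rV[C]_n) (k : 'I_n) :
  (adjmx (delta_mx k 0 : 'cV[C]_n) *m diag_mx g *m (delta_mx k 0 : 'cV[C]_n)) 0 0 = g 0 k.
Proof.
rewrite mul_mx_diag !mxE (bigD1 k) //= !mxE !eqxx /= rmorph1 mul1r mulr1.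
by rewrite big1 ?addr0 // => i /negPf ik; rewrite !mxE ik /= mulr0.
Qed.

Lemma psd_dec n (S : 'M[C]_n) : is_psd S ->
  exists W : 'M[C]_n, exists g : 'rV[C]_n,
    [/\ adjmx W *m W = 1%:M, W *m adjmx W = 1%:M, (forall k, 0 <= g 0 k) &
        S = W *m diag_mx g *m adjmx W].
Proof.
move=> [hS pS].
have /orthomx_spectralP E := hermitian_normalmx (herm_hermsym hS).
have U := spectral_unitarymx S.
have PP : spectralmx S *m adjmx (spectralmx S) = 1%:M.
  by rewrite adjmx_tC; apply/eqP; move: U; rewrite qualifE.
exists (adjmx (spectralmx S)), (spectral_diag S); rewrite adjmxK.
have SE : S = adjmx (spectralmx S) *m diag_mx (spectral_diag S) *m spectralmx S.
  by rewrite adjmx_tC -(invmx_unitary U).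
split => //; first exact: mulmx1C.
move=> k; have := pS (adjmx (spectralmx S) *m delta_mx k 0).
rewrite adjmxM adjmxK {2}SE !mulmxA -(mulmxA _ (spectralmx S) (adjmx _)) PP mulmx1.
by rewrite -(mulmxA _ (spectralmx S) (adjmx _)) PP mulmx1 quad_delta.
Qed.

End Spec.
Section Psd.
Local Close Scope complex_scope.
Variable R : realType.
Local Notation C := R[i].
Implicit Types (c : C).

Lemma quad_diag n (d : 'rV[C]_n) (y : 'cV[C]_n) :
  (adjmx y *m diag_mx d *m y) 0 0 = \sum_k d 0 k * `|y k 0| ^+ 2.
Proof.
rewrite mul_mx_diag !mxE; apply: eq_bigr => k _; rewrite /adjmx !mxE normCKC.
by rewrite mulrAC mulrC.
Qed.

Lemma nsqE n (y : 'cV[C]_n) : (adjmx y *m y) 0 0 = \sum_k `|y k 0| ^+ 2.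
Proof. by rewrite mxE; apply: eq_bigr => k _; rewrite /adjmx !mxE normCKC. Qed.

Lemma nsq_ge0 n (y : 'cV[C]_n) : 0 <= (adjmx y *m y) 0 0.
Proof. by rewrite nsqE sumr_ge0 // => k _; rewrite exprn_ge0. Qed.

Lemma quad_diag_ge0 n (d : 'rV[C]_n) (y : 'cV[C]_n) :
  (forall k, 0 <= d 0 k) -> 0 <= (adjmx y *m diag_mx d *m y) 0 0.
Proof.
move=> d0; rewrite quad_diag sumr_ge0 // => k _.
by rewrite mulr_ge0 // exprn_ge0.
Qed.

Lemma diag_conj n (d : 'rV[C]_n) : (forall k, 0 <= d 0 k) ->
  map_mx Num.conj d = d.
Proof. by move=> d0; apply/matrixP=> i j; rewrite mxE (ord1 i) geC0_conj. Qed.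

Lemma psd_conj n (W : 'M[C]_n) (d : 'rV[C]_n) : (forall k, 0 <= d 0 k) ->
  is_psd (W *m diag_mx d *m adjmx W).
Proof.
move=> d0; split.
  by rewrite /is_hermitian !adjmxM adjmxK adjmx_diag diag_conj // mulmxA.
move=> x; rewrite !mulmxA -(mulmxA _ (adjmx W)).
have -> : adjmx x *m W = adjmx (adjmx W *m x) by rewrite adjmxM adjmxK.
by apply: quad_diag_ge0.
Qed.

End Psd.
Section Psd2.
Local Close Scope complex_scope.
Variable R : realType.
Local Notation C := R[i].
Lemma psd_sqrt n (A : 'M[C]_n) : is_psd A ->
  exists S, is_psd S /\ S *m S = A.
Proof.
move=> /psd_dec [W [g [WW WW' g0 ->]]].
have s0 : forall k, 0 <= (\row_j sqrtC (g 0 j)) 0 k.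
  by move=> k; rewrite mxE sqrtC_ge0.
exists (W *m diag_mx (\row_j sqrtC (g 0 j)) *m adjmx W); split.
  exact: psd_conj.
rewrite !mulmxA -(mulmxA _ (adjmx W) W) WW mulmx1 -(mulmxA W) mulmx_diag.
congr (_ *m diag_mx _ *m _); apply/matrixP=> i j; rewrite !mxE (ord1 i).
by rewrite -expr2 sqrtCK.
Qed.

Lemma psd_gram m n (B : 'M[C]_(m, n)) : is_psd (B *m adjmx B).
Proof.
split; first by rewrite /is_hermitian adjmxM adjmxK.
move=> x; rewrite mulmxA -mulmxA.
have -> : adjmx x *m B = adjmx (adjmx B *m x) by rewrite adjmxM adjmxK.
exact: nsq_ge0.
Qed.

Lemma psd_tr_ge0 n (A : 'M[C]_n) : is_psd A -> 0 <= \tr A.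
Proof.
move=> /psd_dec [W [g [WW WW' g0 ->]]].
rewrite mxtrace_mulC mulmxA WW mul1mx mxtrace_diag sumr_ge0 //.
Qed.

Lemma absmxP n (X : 'M[C]_n) :
  is_psd (absmx X) /\ absmx X *m absmx X = adjmx X *m X.
Proof.
have := psd_gram (adjmx X); rewrite adjmxK => /psd_sqrt [S HS].
have := @xgetPex _ 0 [set S : 'M[C]_n | is_psd S /\ S *m S = adjmx X *m X].
by apply; exists S.
Qed.

End Psd2.
Section Main.
Local Close Scope complex_scope.
Variable R : realType.
Local Notation C := R[i].

Definition nrm n (x : 'cV[C]_n) : C := sqrtC ((adjmx x *m x) 0 0).

Lemma nrm_ge0 n (x : 'cV[C]_n) : 0 <= nrm x.
Proof. by rewrite sqrtC_ge0 nsq_ge0. Qed.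

Lemma CS n (y z : 'cV[C]_n) : `|(adjmx y *m z) 0 0| <= nrm y * nrm z.
Proof.
have := (@CauchySchwarz_sqrt _ _ (@dotmx _ n) z^T y^T).1.
rewrite /=. have D := @dotmxE R[i] n; rewrite !D /nrm mulrC.
have E : forall a b : 'cV[C]_n, (a^T *m (b^T ^t Num.conj)%sesqui) 0 0 = (adjmx b *m a) 0 0.
  by move=> a b; rewrite !mxE; apply: eq_bigr => k _; rewrite /adjmx !mxE mulrC.
by rewrite !E.
Qed.

End Main.
Section Main2.
Local Close Scope complex_scope.
Variable R : realType.
Local Notation C := R[i].

Fact cjm_key : unit. Proof. by []. Qed.
Definition cjm n (W A : 'M[C]_n) := locked_with cjm_key (W *m A *m adjmx W).
Lemma cjmE n (W A : 'M[C]_n) : cjm W A = W *m A *m adjmx W.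
Proof. by rewrite /cjm unlock. Qed.

Lemma proj_contr n (Q : 'M[C]_n) (x : 'cV[C]_n) :
  Q *m Q = Q -> adjmx Q = Q ->
  (adjmx x *m Q *m x) 0 0 <= (adjmx x *m x) 0 0.
Proof.
move=> QQ hQ.
have E : adjmx ((1%:M - Q) *m x) *m ((1%:M - Q) *m x) =
         adjmx x *m x - adjmx x *m Q *m x.
  rewrite adjmxM adjmxB adjmx1 hQ mulmxA -(mulmxA (adjmx x)).
  rewrite mulmxBl mul1mx (mulmxBr Q) mulmx1 QQ subrr subr0.
  by rewrite (mulmxBr (adjmx x)) mulmx1 mulmxBl.
have := nsq_ge0 ((1%:M - Q) *m x); rewrite E.
set A := adjmx x *m x; set B := adjmx x *m Q *m x.
have -> : (A - B) 0 0 = A 0 0 - B 0 0 by rewrite !mxE.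
by rewrite subr_ge0.
Qed.

Lemma QQ_gen n (X P G : 'M[C]_n) : adjmx X *m X = G -> P *m G *m P = P ->
  (X *m P *m adjmx X) *m (X *m P *m adjmx X) = X *m P *m adjmx X.
Proof.
move=> XX PGP; rewrite -!mulmxA (mulmxA (adjmx X) X) XX.
by rewrite (mulmxA G) (mulmxA P) (mulmxA P G P) PGP.
Qed.

Lemma trabs_le n (I : finType) (x y : I -> 'cV[C]_n) (X : 'M[C]_n) :
  X = \sum_b x b *m adjmx (y b) ->
  \tr (absmx X) <= \sum_b nrm (x b) * nrm (y b).
Proof.
move=> XE.
have [pS SS] := absmxP X.
have [W [g [WW WW' g0 SE]]] := psd_dec pS.
have cjM : forall A B, cjm W A *m cjm W B = cjm W (A *m B).
  by move=> A B; rewrite !cjmE !mulmxA -(mulmxA _ (adjmx W) W) WW mulmx1.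
have tr_cj : forall A, \tr (cjm W A) = \tr A.
  by move=> A; rewrite cjmE mxtrace_mulC mulmxA WW mul1mx.
have adj_cj : forall A, adjmx A = A -> adjmx (cjm W A) = cjm W A.
  by move=> A hA; rewrite !cjmE !adjmxM adjmxK hA mulmxA.
pose gi := \row_k (g 0 k)^-1.
have gi0 : forall k, 0 <= gi 0 k by move=> k; rewrite mxE invr_ge0.
have hGp : adjmx (diag_mx gi) = diag_mx gi by rewrite adjmx_diag diag_conj.
have SE' : absmx X = cjm W (diag_mx g) by rewrite cjmE.
have D1 : diag_mx gi *m (diag_mx g *m diag_mx g) = diag_mx g.
  rewrite !mulmx_diag; congr diag_mx; apply/rowP => k; rewrite !mxE.
  case: (eqVneq (g 0 k) 0) => [->|nz]; first by rewrite !(mul0r, mulr0).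
  by rewrite mulrA mulVf // mul1r.
have D2 : diag_mx gi *m diag_mx gi *m (diag_mx g *m diag_mx g) *m
          (diag_mx gi *m diag_mx gi) = diag_mx gi *m diag_mx gi.
  rewrite !mulmx_diag; congr diag_mx; apply/rowP => k; rewrite !mxE.
  case: (eqVneq (g 0 k) 0) => [->|nz]; first by rewrite invr0 !(mul0r, mulr0).
  by field.
move: (diag_mx g) (diag_mx gi) SE' hGp D1 D2 => G Gp SE' hGp D1 D2.
have XX : adjmx X *m X = cjm W (G *m G) by rewrite -SS SE' cjM.
have [U Udef] : {U | U = X *m cjm W Gp} by exists (X *m cjm W Gp).
have Ua : adjmx U = cjm W Gp *m adjmx X by rewrite Udef adjmxM adj_cj.
have UU : U *m adjmx U = X *m cjm W (Gp *m Gp) *m adjmx X.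
  rewrite Ua Udef -!mulmxA (mulmxA (cjm W Gp) (cjm W Gp) (adjmx X)).
  by rewrite (cjM Gp Gp).
have step1 : \tr (absmx X) = \tr (adjmx U *m X).
  by rewrite Ua -(mulmxA (cjm W Gp)) XX (cjM Gp) D1 SE' !tr_cj.
have step2 : \tr (adjmx U *m X) = \sum_b (adjmx (y b) *m (adjmx U *m x b)) 0 0.
  rewrite {1}XE mulmx_sumr linear_sum; apply: eq_bigr => b _.
  rewrite mulmxA; change (\tr (adjmx U *m x b *m adjmx (y b)) = (adjmx (y b) *m (adjmx U *m x b)) 0 0).
  by rewrite mxtrace_mulC trace_mx11.
have contr : forall z : 'cV[C]_n, nrm (adjmx U *m z) <= nrm z.
  move=> z; rewrite /nrm ler_sqrtC ?nnegrE ?nsq_ge0 //.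
  rewrite adjmxM adjmxK mulmxA -(mulmxA (adjmx z) U) UU.
  apply: proj_contr.
    apply: (QQ_gen XX).
    by rewrite (cjM (Gp *m Gp) (G *m G)) cjM D2.
  rewrite !adjmxM adjmxK adj_cj ?mulmxA //.
  by rewrite adjmxM hGp.
have tr0 : 0 <= \tr (absmx X) by apply: psd_tr_ge0.
rewrite -(ger0_norm tr0) step1 step2.
apply: (le_trans (ler_norm_sum _ _ _)); apply: ler_sum => b _.
apply: (le_trans (CS _ _)); rewrite mulrC.
by apply: ler_wpM2r; [exact: nrm_ge0 | exact: contr].
Qed.

End Main2.
Section Main3.
Local Close Scope complex_scope.
Variable R : realType.
Local Notation C := R[i].

Lemma ent_col n (W A : 'M[C]_n) l :
  (adjmx (col l W) *m A *m col l W) 0 0 = (adjmx W *m A *m W) l l.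
Proof.
rewrite !mxE; apply: eq_bigr => k _; rewrite !mxE; congr (_ * _).
by apply: eq_bigr => i _; rewrite /adjmx !mxE.
Qed.

Lemma ent_col1 n (W : 'M[C]_n) l :
  (adjmx (col l W) *m col l W) 0 0 = (adjmx W *m W) l l.
Proof. by rewrite !mxE; apply: eq_bigr => k _; rewrite /adjmx !mxE. Qed.

Lemma sum_col n (W : 'M[C]_n) :
  \sum_l col l W *m adjmx (col l W) = W *m adjmx W.
Proof.
apply/matrixP => i j; rewrite summxE !mxE; apply: eq_bigr => l _.
by rewrite !mxE big_ord1 /adjmx !mxE.
Qed.

Lemma trabs_rep n (Y : 'M[C]_n) : exists xy : ('I_n -> 'cV[C]_n) * ('I_n -> 'cV[C]_n),
  Y = \sum_l xy.1 l *m adjmx (xy.2 l) /\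
  \sum_l nrm (xy.1 l) * nrm (xy.2 l) = \tr (absmx Y).
Proof.
have [pS SS] := absmxP Y.
have [W [g [WW WW' g0 SE]]] := psd_dec pS.
exists (fun l => Y *m col l W, fun l => col l W); split => /=.
  under eq_bigr do rewrite -mulmxA.
  by rewrite -mulmx_sumr sum_col WW' mulmx1.
have -> : \tr (absmx Y) = \sum_l g 0 l.
  by rewrite SE mxtrace_mulC mulmxA WW mul1mx mxtrace_diag.
apply: eq_bigr => l _.
have -> : nrm (col l W) = 1.
  by rewrite /nrm ent_col1 WW mxE eqxx sqrtC1.
rewrite mulr1 /nrm adjmxM mulmxA -(mulmxA _ (adjmx Y)) -SS.
rewrite ent_col SE.
have -> : adjmx W *m (W *m diag_mx g *m adjmx W *m (W *m diag_mx g *m adjmx W)) *m W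
    = diag_mx g *m diag_mx g.
  rewrite !mulmxA WW mul1mx -(mulmxA _ (adjmx W) W) WW mulmx1.
  by rewrite -(mulmxA _ (adjmx W) W) WW mulmx1.
by rewrite mulmx_diag !mxE eqxx mulr1n -expr2 sqrCK.
Qed.

End Main3.
Section Main4.
Local Close Scope complex_scope.
Variable R : realType.
Local Notation C := R[i].

Lemma nrmZ n (c : C) (x : 'cV[C]_n) : nrm (c *: x) = `|c| * nrm x.
Proof.
rewrite /nrm; have -> : (adjmx (c *: x) *m (c *: x)) 0 0 = `|c| ^+ 2 * (adjmx x *m x) 0 0.
  by rewrite adjmxZ -scalemxAl -scalemxAr scalerA mxE normCKC.
by rewrite sqrtCM ?nnegrE ?exprn_ge0 ?nsq_ge0 // sqrCK.
Qed.

Lemma trabs_comb n (J : finType) (c : J -> C) (Y : J -> 'M[C]_n) :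
  \tr (absmx (\sum_j c j *: Y j)) <= \sum_j `|c j| * \tr (absmx (Y j)).
Proof.
have [f Hf] := boolp.choice (fun j => trabs_rep (Y j)).
have := @trabs_le R n (J * 'I_n)%type
  (fun p => c p.1 *: (f p.1).1 p.2) (fun p => (f p.1).2 p.2)
  (\sum_j c j *: Y j).
rewrite -(pair_bigA _ (fun j l => nrm (c j *: (f j).1 l) * nrm ((f j).2 l))).
rewrite -(pair_bigA _ (fun j l => c j *: (f j).1 l *m adjmx ((f j).2 l))).
have -> : \sum_j \sum_l nrm (c j *: (f j).1 l) * nrm ((f j).2 l) =
          \sum_j `|c j| * \tr (absmx (Y j)).
  apply: eq_bigr => j _; have [_ <-] := Hf j; rewrite mulr_sumr.
  by apply: eq_bigr => l _; rewrite nrmZ mulrA.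
apply; apply: eq_bigr => j _; rewrite (proj1 (Hf j)).
rewrite scaler_sumr; apply: eq_bigr => l _.
by rewrite scalemxAl.
Qed.
End Main4.
Section Phys.
Variable R : realType.
Local Notation C := R[i].

Lemma trabs_ge0 n (Z : 'M[C]_n) : 0 <= \tr (absmx Z).
Proof. exact: psd_tr_ge0 (absmxP Z).1. Qed.

Lemma trabs_real n (Z : 'M[C]_n) : \tr (absmx Z) = (trnorm Z)%:C.
Proof. by rewrite /trnorm RRe_real // ger0_real // trabs_ge0. Qed.

Lemma trabs_sub n (A B : 'M[C]_n) :
  \tr (absmx (A - B)) <= \tr (absmx A) + \tr (absmx B).
Proof.
have := @trabs_comb R n bool (fun b => if b then 1 else -1) (fun b => if b then A else B).
rewrite !big_bool /= scale1r scaleN1r normrN normr1 !mul1r.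
by [].
Qed.

Lemma complete n (v : 'I_n -> 'cV[C]_n) :
  (forall j k, (adjmx (v j) *m v k) 0 0 = (j == k)%:R) ->
  \sum_j v j *m adjmx (v j) = 1%:M.
Proof.
move=> on.
pose V := \matrix_(i, j) v j i 0.
have VV : adjmx V *m V = 1%:M.
  apply/matrixP => j k; rewrite [RHS]mxE -on !mxE; apply: eq_bigr => i _.
  by rewrite /adjmx /V !mxE.
have := mulmx1C VV => <-.
apply/matrixP => i k; rewrite summxE !mxE; apply: eq_bigr => j _.
by rewrite /adjmx /V !mxE big_ord1 !mxE.
Qed.

Lemma sum_tens m n (F : 'I_(m * n) -> C) :
  \sum_k F k = \sum_i \sum_b F (mxtens_index (i, b)).
Proof.
rewrite (pair_bigA _ (fun i b => F (mxtens_index (i, b)))) /=.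
rewrite (reindex (@mxtens_index m n)) /=; last first.
  by exists (@mxtens_unindex m n) => x _; rewrite ?mxtens_indexK ?mxtens_unindexK.
by apply: eq_bigr => -[i b].
Qed.

Lemma tr_tens m n (A : 'M[C]_m) (B : 'M[C]_n) : \tr (A *t B) = \tr A * \tr B.
Proof.
rewrite /mxtrace sum_tens mulr_suml; apply: eq_bigr => i _.
by rewrite mulr_sumr; apply: eq_bigr => b _; rewrite tensmxE.
Qed.

Lemma psd_tens m n (A : 'M[C]_m) (B : 'M[C]_n) :
  is_psd A -> is_psd B -> is_psd (A *t B).
Proof.
move=> /psd_sqrt [SA [[hA _] <-]] /psd_sqrt [SB [[hB _] <-]].
rewrite -{2}hA -{2}hB -tensmx_mul -adjmx_tens.
exact: psd_gram.
Qed.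

End Phys.
Section Phys2.
Variable R : realType.
Local Notation C := R[i].

Lemma mxtrace_sum n (I : finType) (F : I -> 'M[C]_n) :
  \tr (\sum_i F i) = \sum_i \tr (F i).
Proof.
rewrite /mxtrace; under eq_bigr do rewrite summxE.
exact: exchange_big.
Qed.

Lemma ptraceB_sum dS dB (I : finType) (F : I -> 'M[C]_(dS * dB)) :
  ptraceB (\sum_i F i) = \sum_i ptraceB (F i).
Proof.
apply/matrixP => i k; rewrite summxE !mxE.
under eq_bigr do rewrite summxE.
rewrite exchange_big; apply: eq_bigr => j _; by rewrite mxE.
Qed.

Lemma ptraceBZ dS dB (c : C) (A : 'M[C]_(dS * dB)) :
  ptraceB (c *: A) = c *: ptraceB A.
Proof.
apply/matrixP => i k; rewrite !mxE mulr_sumr; apply: eq_bigr => b _.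
by rewrite mxE.
Qed.

Lemma ptraceBB dS dB (A B : 'M[C]_(dS * dB)) :
  ptraceB (A - B) = ptraceB A - ptraceB B.
Proof.
apply/matrixP => i k; rewrite !mxE -sumrB; apply: eq_bigr => b _.
by rewrite !mxE.
Qed.

Lemma ptrace_ketbra_le dS dB (v : 'cV[C]_(dS * dB)) :
  (adjmx v *m v) 0 0 = 1 -> \tr (absmx (ptraceB (ketbra v))) <= 1.
Proof.
move=> nv.
pose s b : 'cV[C]_dS := \col_i v (mxtens_index (i, b)) 0.
have -> : ptraceB (ketbra v) = \sum_b s b *m adjmx (s b).
  apply/matrixP => i k; rewrite summxE !mxE; apply: eq_bigr => b _.
  by rewrite !mxE !big_ord1 /adjmx /s !mxE.
apply: (le_trans (trabs_le (erefl _))).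
have -> : \sum_b nrm (s b) * nrm (s b) = \sum_b (adjmx (s b) *m s b) 0 0.
  by apply: eq_bigr => b _; rewrite /nrm -expr2 sqrtCK.
have -> : \sum_b (adjmx (s b) *m s b) 0 0 = (adjmx v *m v) 0 0.
  rewrite [RHS]nsqE sum_tens exchange_big; apply: eq_bigr => b _.
  by rewrite nsqE; apply: eq_bigr => i _; rewrite /s !mxE.
by rewrite nv.
Qed.

Lemma ptrace_mc_le dS dB (v : 'I_(dS * dB) -> 'cV[C]_(dS * dB))
    (M : {set 'I_(dS * dB)}) :
  (forall j, (adjmx (v j) *m v j) 0 0 = 1) -> (0 < #|M|)%N ->
  \tr (absmx (ptraceB (rho_mc v M))) <= 1.
Proof.
move=> nv M0.
have -> : ptraceB (rho_mc v M) =
    \sum_j ((j \in M)%:R / #|M|%:R) *: ptraceB (ketbra (v j)).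
  rewrite /rho_mc big_mkcond ptraceBZ ptraceB_sum scaler_sumr /=.
  apply: eq_bigr => j _; case: (j \in M) => /=; first by rewrite mul1r.
  have -> : ptraceB (0 : 'M[C]_(dS * dB)) = 0.
    by apply/matrixP => i k; rewrite !mxE big1 // => b _; rewrite mxE.
  by rewrite mul0r scale0r scaler0.
apply: (le_trans (trabs_comb _ _)).
apply: (@le_trans _ _ (\sum_j `|(j \in M)%:R / #|M|%:R : C|)).
  apply: ler_sum => j _; rewrite -[X in _ <= X]mulr1.
  by apply: ler_wpM2l => //; apply: ptrace_ketbra_le.
have Mn : (#|M|%:R : C) != 0 by rewrite pnatr_eq0 -lt0n.
rewrite (eq_bigr (fun j => (j \in M)%:R / #|M|%:R)); last first.
  move=> j _; rewrite ger0_norm // divr_ge0 //.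
rewrite -mulr_suml.
have -> : \sum_j ((j \in M)%:R : C) = #|M|%:R.
  rewrite -sum1_card natr_sum [RHS]big_mkcond /=; apply: eq_bigr => j _.
  by case: (j \in M).
by rewrite divff.
Qed.

End Phys2.
Section Core.
Variable R : realType.
Local Notation C := R[i].

Lemma mxtrace_sumP n (I : finType) (Pr : pred I) (F : I -> 'M[C]_n) :
  \tr (\sum_(i | Pr i) F i) = \sum_(i | Pr i) \tr (F i).
Proof.
rewrite /mxtrace; under eq_bigr do rewrite summxE.
exact: exchange_big.
Qed.

Lemma core dS dB (v : 'I_(dS * dB) -> 'cV[C]_(dS * dB)) (rS : 'M[C]_dS)
  (rB : 'M[C]_dB) (M : {set 'I_(dS * dB)}) (e1 : R) :
  (forall j k, (adjmx (v j) *m v k) 0 0 = (j == k)%:R) ->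
  is_density rS -> is_density rB -> (0 < #|M|)%N -> 0 <= e1 ->
  (forall j, j \in M -> DS (ketbra (v j)) (rho_mc v M) < e1) ->
  DS (diag_ens v (rS *t rB)) (rho_mc v M) <=
    e1 + complex.Re (\tr (Pout v M *m (rS *t rB))).
Proof.
move=> on [pS tS] [pB tB] M0 e0 eth.
set rho := rS *t rB.
have prho : is_psd rho := psd_tens pS pB.
have trho : \tr rho = 1 by rewrite tr_tens tS tB mulr1.
have nv : forall j, (adjmx (v j) *m v j) 0 0 = 1 by move=> j; rewrite on eqxx.
pose p j := (adjmx (v j) *m rho *m v j) 0 0.
have p0 : forall j, 0 <= p j by move=> j; exact: prho.2.
pose P j := complex.Re (p j).
have pE : forall j, p j = (P j)%:C by move=> j; rewrite /P RRe_real // ger0_real.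
have P0 : forall j, 0 <= P j by move=> j; rewrite -ler0c -pE.
have trK : forall j, \tr (ketbra (v j) *m rho) = p j.
  by move=> j; rewrite /ketbra -mulmxA mxtrace_mulC trace_mx11.
have sump : \sum_j p j = 1.
  rewrite -trho -[X in _ = \tr X]mul1mx -(complete on) mulmx_suml mxtrace_sum.
  by apply: eq_bigr => j _; rewrite trK.
have sumP : \sum_j P j = 1.
  apply: (@complexI R); rewrite rmorph_sum rmorph1 -sump.
  by apply: eq_bigr => j _; rewrite pE.
have dE : diag_ens v rho = \sum_j p j *: ketbra (v j).
  rewrite /diag_ens; apply: eq_bigr => j _.
  rewrite /ketbra !mulmxA -(mulmxA (v j) (adjmx (v j)) rho).
  rewrite -(mulmxA (v j) (adjmx (v j) *m rho) (v j)).
  by rewrite [adjmx (v j) *m rho *m v j]mx11_scalar mul_mx_scalar -scalemxAl.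
set A := fun j => ptraceB (ketbra (v j)).
set sg := ptraceB (rho_mc v M).
have XE : ptraceB (diag_ens v rho) - sg = \sum_j p j *: (A j - sg).
  have -> : \sum_j p j *: (A j - sg) = \sum_j p j *: A j - (\sum_j p j) *: sg.
    by rewrite scaler_suml -sumrB; apply: eq_bigr => j _; rewrite scalerBr.
  rewrite sump scale1r dE ptraceB_sum; congr (_ - _).
  by apply: eq_bigr => j _; rewrite ptraceBZ.
have T1 : \tr (absmx (ptraceB (diag_ens v rho) - sg)) <=
          \sum_j p j * \tr (absmx (A j - sg)).
  rewrite XE; apply: (le_trans (trabs_comb _ _)).
  by apply: ler_sum => j _; rewrite ger0_norm.
pose T j := trnorm (A j - sg).
have T2 : forall j, T j <= 2.
  move=> j; have := trabs_sub (A j) sg; rewrite !trabs_real -rmorphD lecR => h.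
  have h1 : trnorm (A j) <= 1.
    by rewrite -lecR -trabs_real rmorph1; exact: ptrace_ketbra_le.
  have h2 : trnorm sg <= 1.
    by rewrite -lecR -trabs_real rmorph1; exact: ptrace_mc_le.
  rewrite /T; lra.
have T3 : forall j, j \in M -> T j <= 2 * e1.
  move=> j /eth; rewrite /DS /T /A /sg => h; lra.
have Main : trnorm (ptraceB (diag_ens v rho) - sg) <= \sum_j P j * T j.
  rewrite -lecR -trabs_real rmorph_sum; apply: (le_trans T1).
  by apply: ler_sum => j _; rewrite pE trabs_real -rmorphM.
have QE : complex.Re (\tr (Pout v M *m rho)) = \sum_(j | j \notin M) P j.
  rewrite /Pout mulmx_suml mxtrace_sumP.
  rewrite (eq_bigl (fun j => j \notin M)); last by move=> j; rewrite !inE.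
  rewrite (eq_bigr (fun j => (P j)%:C)); last by move=> j _; rewrite trK pE.
  by rewrite -rmorph_sum.
rewrite QE /DS -/sg.
move: Main; rewrite (bigID (fun j => j \in M)) /=.
have a_le : \sum_(j | j \in M) P j * T j <= 2 * e1.
  apply: (@le_trans _ _ (\sum_(j | j \in M) P j * (2 * e1))).
    by apply: ler_sum => j jM; apply: ler_wpM2l => //; apply: T3.
  rewrite -mulr_suml -[X in _ <= X]mul1r; apply: ler_wpM2r; first lra.
  move: sumP; rewrite (bigID (fun j => j \in M)) /= => <-.
  by rewrite lerDl sumr_ge0.
have b_le : \sum_(j | j \notin M) P j * T j <= 2 * \sum_(j | j \notin M) P j.
  rewrite mulr_sumr; apply: ler_sum => j _; rewrite mulrC.
  by apply: ler_wpM2r => //; apply: T2.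
move=> Main; lra.
Qed.
End Core.

Unset Implicit Arguments. Set Strict Implicit.

Theorem lemma1 (R : realType) (dS : nat) (dB : nat -> nat)
  (H : forall N, 'M[R[i]]_(dS * dB N))
  (E : forall N, 'I_(dS * dB N) -> R)
  (v : forall N, 'I_(dS * dB N) -> 'cV[R[i]]_(dS * dB N))
  (rhoS : nat -> 'M[R[i]]_dS) (rhoB : forall N, 'M[R[i]]_(dB N))
  (u alpha : R) (Delta : nat -> R) :
  (* H^(N) Hermitian, non-degenerate spectrum, orthonormal eigenbasis *)
  (forall N, is_hermitian (H N)) ->
  (forall N, injective (E N)) ->
  (forall N j k, (adjmx (v N j) *m v N k) 0 0 = (j == k)%:R) ->
  (forall N j, H N *m v N j = (E N j)%:C *: v N j) ->
  (* product initial state *)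
  (forall N, is_density (rhoS N)) -> (forall N, is_density (rhoB N)) ->
  (* widths Delta_N > 0, Delta_N = O(N^alpha), 0 <= alpha < 1 *)
  (forall N, 0 < Delta N) -> 0 <= alpha < 1 ->
  (exists c : R, exists N0 : nat, forall N, (N0 <= N)%N ->
      Delta N <= c * (N%:R `^ alpha)) ->
  (* nonempty energy shell *)
  (forall N, 0 < #|shell (E N) (u * N%:R) (Delta N)|)%N ->
  (* (i) strong ETH *)
  (forall eps : R, 0 < eps -> exists N0 : nat, forall N, (N0 <= N)%N ->
     forall j, j \in shell (E N) (u * N%:R) (Delta N) ->
       DS (ketbra (v N j)) (rho_mc (v N) (shell (E N) (u * N%:R) (Delta N)))
         < eps) ->
  (* (ii) initial energy distribution *)
  (forall eps : R, 0 < eps -> exists N0 : nat, forall N, (N0 <= N)%N ->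
     \tr (Pout (v N) (shell (E N) (u * N%:R) (Delta N)) *m
          tensmx (rhoS N) (rhoB N)) < eps%:C) ->
  (* conclusion *)
  forall eps : R, 0 < eps -> exists N0 : nat, forall N, (N0 <= N)%N ->
    DS (diag_ens (v N) (tensmx (rhoS N) (rhoB N)))
       (rho_mc (v N) (shell (E N) (u * N%:R) (Delta N))) < eps.
Proof.
move=> _ _ on _ dS0 dB0 _ _ _ shell0 eth out eps e0.
have e2 : 0 < eps / 2 by rewrite divr_gt0.
have [N1 H1] := eth _ e2.
have [N2 H2] := out _ e2.
exists (maxn N1 N2) => N hN.
have hN1 : (N1 <= N)%N by apply: leq_trans hN; apply: leq_maxl.
have hN2 : (N2 <= N)%N by apply: leq_trans hN; apply: leq_maxr.
have := core (on N) (dS0 N) (dB0 N) (shell0 N) (ltW e2) (H1 N hN1).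
move: (H2 N hN2); rewrite ltcE => /andP [_ h] c.
move: h c => /=; lra.
Qed.
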